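(* Let $g\in\mathcal{G}_0$ and let $k>1$ be an integer. Then $$\limsup_{x\to0^+}\frac{g(x)}{\eta(x)}=\limsup_{n\to\infty}\frac{g(k^{-n})}{\eta(k^{-n})}\quad\text{and}\quad\liminf_{x\to0^+}\frac{g(x)}{\eta(x)}=\liminf_{n\to\infty}\frac{g(k^{-n})}{\eta(k^{-n})}.$$
   Context: $\mathcal{G}_0$ is the set of concave functions $g:[0,1]\to\mathbb{R}$ with $g(0)=\lim_{x\to0^+}g(x)=0$. Let $\eta(x)=-x\log x$ for $x>0$ and $\eta(0)=0$. *)

(* Defs.v *)
From Stdlib Require Import Reals Lra Lia.
Open Scope R_scope.

Definition eta (x : R) : R := if Rle_dec x 0 then 0 else - x * ln x.

Definition concave_on_01 (g : R -> R) : Prop :=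
  forall x y t, 0 <= x <= 1 -> 0 <= y <= 1 -> 0 <= t <= 1 ->
    t * g x + (1 - t) * g y <= g (t * x + (1 - t) * y).

(* The class G_0: concave g : [0,1] -> R with g(0) = lim_{x->0+} g(x) = 0.
   g is represented by a total function R -> R; only its values on [0,1] matter. *)
Definition in_G0 (g : R -> R) : Prop :=
  concave_on_01 g /\ g 0 = 0 /\
  (forall eps, 0 < eps -> exists delta, 0 < delta /\
     forall x, 0 < x <= 1 -> x < delta -> Rabs (g x) < eps).

Inductive Rbar : Type :=
  | Finite : R -> Rbar
  | p_infty : Rbar
  | m_infty : Rbar.

Definition is_limsup_seq (u : nat -> R) (l : Rbar) : Prop :=
  match l with
  | Finite L => forall eps, 0 < eps ->
      (forall N, exists n, (N <= n)%nat /\ L - eps < u n) /\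
      (exists N, forall n, (N <= n)%nat -> u n < L + eps)
  | p_infty => forall M N, exists n, (N <= n)%nat /\ M < u n
  | m_infty => forall M, exists N, forall n, (N <= n)%nat -> u n < M
  end.

Definition is_liminf_seq (u : nat -> R) (l : Rbar) : Prop :=
  match l with
  | Finite L => forall eps, 0 < eps ->
      (forall N, exists n, (N <= n)%nat /\ u n < L + eps) /\
      (exists N, forall n, (N <= n)%nat -> L - eps < u n)
  | p_infty => forall M, exists N, forall n, (N <= n)%nat -> M < u n
  | m_infty => forall M N, exists n, (N <= n)%nat /\ u n < M
  end.

Definition is_limsup_right0 (f : R -> R) (l : Rbar) : Prop :=
  match l with
  | Finite L => forall eps, 0 < eps ->
      (forall delta, 0 < delta -> exists x, 0 < x < delta /\ L - eps < f x) /\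
      (exists delta, 0 < delta /\ forall x, 0 < x < delta -> f x < L + eps)
  | p_infty => forall M delta, 0 < delta -> exists x, 0 < x < delta /\ M < f x
  | m_infty => forall M, exists delta, 0 < delta /\
      forall x, 0 < x < delta -> f x < M
  end.

Definition is_liminf_right0 (f : R -> R) (l : Rbar) : Prop :=
  match l with
  | Finite L => forall eps, 0 < eps ->
      (forall delta, 0 < delta -> exists x, 0 < x < delta /\ f x < L + eps) /\
      (exists delta, 0 < delta /\ forall x, 0 < x < delta -> L - eps < f x)
  | p_infty => forall M, exists delta, 0 < delta /\
      forall x, 0 < x < delta -> M < f x
  | m_infty => forall M delta, 0 < delta -> exists x, 0 < x < delta /\ f x < M
  end.

(* Main.v *)
Require Import Defs.
From Stdlib Require Import Reals Lra Lia.
Open Scope R_scope.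

Lemma ln_le' x y : 0 < x -> x <= y -> ln x <= ln y.
Proof. intros Hx Hxy. destruct (Req_dec x y) as [->|Hne]; [lra|].
  left; apply ln_increasing; lra. Qed.

Lemma small_eta T e : 0 < e -> exists eta, 0 < eta /\ eta <= 1/2 /\ 2 * Rabs T * eta <= e.
Proof. intros He. pose proof (Rabs_pos T) as HT.
  set (q := e / (4 * (Rabs T + 1))).
  assert (Hq : q * (4 * (Rabs T + 1)) = e) by (unfold q; field; lra).
  assert (0 < q) by (unfold q; apply Rdiv_lt_0_compat; lra).
  exists (Rmin (1/2) q). split; [apply Rmin_pos; lra|]. split; [apply Rmin_l|].
  pose proof (Rmin_r (1/2) q). pose proof (Rmin_pos (1/2) q ltac:(lra) H). nra. Qed.

Lemma alg1 u B c eta : Rabs (c - 1) < eta -> eta <= 1/2 -> u < B ->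
  Rmax u (u * c) < B + Rabs B * eta.
Proof. intros Hc He Hu. unfold Rabs in *. apply Rmax_lub_lt;
  destruct (Rcase_abs (c-1)); destruct (Rcase_abs B); nra. Qed.

Lemma alg2 u T c eta : Rabs (c - 1) < eta -> 0 < eta -> eta <= 1/2 -> T < Rmax u (u * c) ->
  T - 2 * Rabs T * eta < u.
Proof. intros Hc He0 He H. unfold Rmax in H. destruct (Rle_dec u (u*c)).
  - unfold Rabs in *. destruct (Rcase_abs (c-1)); destruct (Rcase_abs T);
    destruct (Rle_dec 0 u); nra.
  - unfold Rabs. destruct (Rcase_abs T); nra. Qed.

Section Abs.
Variables (f : R -> R) (u : nat -> R) (a : nat -> R).
Hypothesis Hapos : forall n, 0 < a n.
Hypothesis Ha0 : forall d, 0 < d -> exists N, forall n, (N <= n)%nat -> a n < d.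
Hypothesis Hfa : forall n, f (a n) = u n.
Hypothesis HB : forall eta, 0 < eta -> forall M : nat, exists delta, 0 < delta /\
  forall x, 0 < x < delta -> exists m c, (M <= m)%nat /\ Rabs (c - 1) < eta /\
     f x <= Rmax (u m) (u m * c).

Lemma abs_limsup l : is_limsup_right0 f l <-> is_limsup_seq u l.
Proof.
destruct l as [L| |]; simpl; split.
- intros H e He. split.
  + intros N. destruct (small_eta (L - e/2) (e/2)) as [eta [He1 [He2 He3]]]; [lra|].
    destruct (HB eta He1 N) as [d [Hd Hx]].
    destruct (H (e/2) ltac:(lra)) as [H1 _].
    destruct (H1 d Hd) as [x [Hxd Hfx]].
    destruct (Hx x Hxd) as [m [c [Hm [Hc Hf]]]].
    exists m. split; [auto|].
    pose proof (alg2 (u m) (L - e/2) c eta Hc He1 He2 ltac:(lra)). lra.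
  + destruct (H e He) as [_ [d [Hd H2]]]. destruct (Ha0 d Hd) as [N HN].
    exists N. intros n Hn. rewrite <- Hfa. apply H2. split; auto.
- intros H e He. split.
  + intros d Hd. destruct (Ha0 d Hd) as [N HN].
    destruct (H e He) as [H1 _]. destruct (H1 N) as [n [Hn Hu]].
    exists (a n). split; [split; auto|]. rewrite Hfa; auto.
  + destruct (H (e/2) ltac:(lra)) as [_ [N HN]].
    destruct (small_eta (L + e/2) (e/2)) as [eta [He1 [He2 He3]]]; [lra|].
    destruct (HB eta He1 N) as [d [Hd Hx]].
    exists d. split; auto. intros x Hxd.
    destruct (Hx x Hxd) as [m [c [Hm [Hc Hf]]]].
    pose proof (alg1 (u m) (L + e/2) c eta Hc He2 (HN m Hm)). lra.
- intros H M N.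
  destruct (HB (1/4) ltac:(lra) N) as [d [Hd Hx]].
  destruct (H (2 * Rabs M + 2) d Hd) as [x [Hxd Hfx]].
  destruct (Hx x Hxd) as [m [c [Hm [Hc Hf]]]].
  exists m. split; auto.
  pose proof (alg2 (u m) (2 * Rabs M + 2) c (1/4) Hc ltac:(lra) ltac:(lra) ltac:(lra)).
  pose proof (Rabs_pos M). pose proof (Rle_abs M).
  rewrite (Rabs_pos_eq (2 * Rabs M + 2)) in H0 by lra. lra.
- intros H M d Hd. destruct (Ha0 d Hd) as [N HN].
  destruct (H M N) as [n [Hn Hu]]. exists (a n). split; [split; auto|]. rewrite Hfa; auto.
- intros H M. destruct (H M) as [d [Hd H2]]. destruct (Ha0 d Hd) as [N HN].
  exists N. intros n Hn. rewrite <- Hfa. apply H2. split; auto.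
- intros H M. pose proof (Rabs_pos M). pose proof (Rle_abs (-M)).
  rewrite Rabs_Ropp in H1.
  destruct (H (- 2 * Rabs M - 2)) as [N HN].
  destruct (HB (1/4) ltac:(lra) N) as [d [Hd Hx]].
  exists d. split; auto. intros x Hxd.
  destruct (Hx x Hxd) as [m [c [Hm [Hc Hf]]]].
  pose proof (alg1 (u m) (- 2 * Rabs M - 2) c (1/4) Hc ltac:(lra) (HN m Hm)).
  rewrite (Rabs_left (- 2 * Rabs M - 2)) in H2 by lra. lra.
Qed.
End Abs.

Definition ropp (l : Rbar) : Rbar :=
  match l with Finite L => Finite (- L) | p_infty => m_infty | m_infty => p_infty end.

Lemma liminf_neg_f f l : is_liminf_right0 f l <-> is_limsup_right0 (fun x => - f x) (ropp l).
Proof.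
destruct l as [L| |]; simpl; split.
- intros H e He. destruct (H e He) as [H1 [d [Hd H2]]]. split.
  + intros d' Hd'. destruct (H1 d' Hd') as [x [Hx Hf]]. exists x. split; auto; lra.
  + exists d. split; auto. intros x Hx. specialize (H2 x Hx). lra.
- intros H e He. destruct (H e He) as [H1 [d [Hd H2]]]. split.
  + intros d' Hd'. destruct (H1 d' Hd') as [x [Hx Hf]]. exists x. split; auto; lra.
  + exists d. split; auto. intros x Hx. specialize (H2 x Hx). lra.
- intros H M. destruct (H (-M)) as [d [Hd H2]]. exists d. split; auto.
  intros x Hx. specialize (H2 x Hx). lra.
- intros H M. destruct (H (-M)) as [d [Hd H2]]. exists d. split; auto.
  intros x Hx. specialize (H2 x Hx). lra.
- intros H M d Hd. destruct (H (-M) d Hd) as [x [Hx Hf]]. exists x. split; auto; lra.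
- intros H M d Hd. destruct (H (-M) d Hd) as [x [Hx Hf]]. exists x. split; auto; lra.
Qed.

Lemma liminf_neg_s u l : is_liminf_seq u l <-> is_limsup_seq (fun n => - u n) (ropp l).
Proof.
destruct l as [L| |]; simpl; split.
- intros H e He. destruct (H e He) as [H1 [d H2]]. split.
  + intros d'. destruct (H1 d') as [x [Hx Hf]]. exists x. split; auto; lra.
  + exists d. intros x Hx. specialize (H2 x Hx). lra.
- intros H e He. destruct (H e He) as [H1 [d H2]]. split.
  + intros d'. destruct (H1 d') as [x [Hx Hf]]. exists x. split; auto; lra.
  + exists d. intros x Hx. specialize (H2 x Hx). lra.
- intros H M. destruct (H (-M)) as [d H2]. exists d.
  intros x Hx. specialize (H2 x Hx). lra.
- intros H M. destruct (H (-M)) as [d H2]. exists d.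
  intros x Hx. specialize (H2 x Hx). lra.
- intros H M d. destruct (H (-M) d) as [x [Hx Hf]]. exists x. split; auto; lra.
- intros H M d. destruct (H (-M) d) as [x [Hx Hf]]. exists x. split; auto; lra.
Qed.

Section App.
Variables (g : R -> R) (k : nat).
Hypothesis Hg : in_G0 g.
Hypothesis Hk : (1 < k)%nat.

Let K := INR k.
Let a (n : nat) := / K ^ n.

Lemma K2 : 2 <= K.
Proof. unfold K. replace 2 with (INR 2) by (simpl; lra). apply le_INR; lia. Qed.

Lemma apos n : 0 < a n.
Proof. unfold a. apply Rinv_0_lt_compat, pow_lt. pose proof K2; lra. Qed.

Lemma aS n : a (S n) = a n / K.
Proof. unfold a. simpl. pose proof K2. pose proof (pow_lt K n ltac:(lra)). field. lra. Qed.

Lemma a_le_1 n : a n <= 1.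
Proof. induction n. unfold a; simpl; lra. rewrite aS. pose proof K2. pose proof (apos n).
  apply Rle_trans with (a n); auto. apply Rmult_le_reg_r with K; [lra|].
  unfold Rdiv. rewrite Rmult_assoc, Rinv_l by lra. nra. Qed.

Lemma a_anti m n : (m <= n)%nat -> a n <= a m.
Proof. induction 1; [lra|]. rewrite aS. pose proof K2. pose proof (apos m0).
  apply Rle_trans with (a m0); auto. apply Rmult_le_reg_r with K; [lra|].
  unfold Rdiv. rewrite Rmult_assoc, Rinv_l by lra. nra. Qed.

Lemma Kpow n : INR n + 1 <= K ^ n.
Proof. induction n. simpl; lra. rewrite S_INR. simpl. pose proof K2. pose proof (pos_INR n). nra. Qed.

Lemma a0 : forall d, 0 < d -> exists N, forall n, (N <= n)%nat -> a n < d.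
Proof. intros d Hd. destruct (INR_unbounded (/ d)) as [N HN]. exists N. intros n Hn.
  apply Rle_lt_trans with (a N); [apply a_anti; auto|].
  unfold a. pose proof (Kpow N). pose proof (pos_INR N).
  rewrite <- (Rinv_inv d). apply Rinv_lt_contravar.
  - apply Rmult_lt_0_compat; [apply Rinv_0_lt_compat; auto| lra].
  - lra. Qed.

Lemma bracket x : 0 < x <= 1 -> exists n, a (S n) <= x <= a n.
Proof. intros Hx. destruct (a0 x ltac:(lra)) as [N HN]. specialize (HN N (le_n N)).
  revert HN. induction N; intros HN.
  - unfold a in HN. simpl in HN. lra.
  - destruct (Rlt_dec (a N) x). auto. exists N. lra. Qed.

Lemma lnK : 0 < ln K.
Proof. rewrite <- ln_1. apply ln_increasing; pose proof K2; lra. Qed.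

Lemma ln_a n : ln (a n) = - (INR n * ln K).
Proof. unfold a. rewrite ln_Rinv, ln_pow; auto; pose proof K2; try lra. apply pow_lt; lra. Qed.

Lemma eta_pos x : 0 < x -> eta x = - x * ln x.
Proof. intros. unfold eta. destruct (Rle_dec x 0); lra. Qed.

Lemma mono x y : 0 < x -> x <= y -> y <= 1 -> g y / y <= g x / x.
Proof. intros Hx Hxy Hy. destruct Hg as [Hc [H0 _]].
  set (t := x / y).
  assert (0 < y) by lra.
  assert (Ht : 0 <= t <= 1). { unfold t. split. apply Rlt_le, Rdiv_lt_0_compat; lra.
    apply Rmult_le_reg_r with y; auto. unfold Rdiv; rewrite Rmult_assoc, Rinv_l; lra. }
  specialize (Hc y 0 t ltac:(lra) ltac:(lra) Ht). rewrite H0 in Hc.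
  replace (t * y + (1 - t) * 0) with x in Hc by (unfold t; field; lra).
  replace (g y / y) with ((t * g y + (1 - t) * 0) / x) by (unfold t; field; lra).
  unfold Rdiv. apply Rmult_le_compat_r; [left; apply Rinv_0_lt_compat; auto| auto]. Qed.

Let r x := g x / eta x.
Let u n := g (a n) / eta (a n).

Lemma div_mono H p q : 0 < q -> q <= p -> 0 <= H -> H / p <= H / q.
Proof. intros. unfold Rdiv. apply Rmult_le_compat_l; auto. apply Rinv_le_contravar; auto. Qed.
Lemma div_mono_neg H p q : 0 < q -> q <= p -> H <= 0 -> H / q <= H / p.
Proof. intros. unfold Rdiv. apply Rmult_le_compat_neg_l; auto. apply Rinv_le_contravar; auto. Qed.

Lemma ln_bounds n x : a (S n) <= x <= a n ->
  INR n * ln K <= - ln x <= (INR n + 1) * ln K.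
Proof. intros Hx. pose proof (apos (S n)).
  pose proof (ln_le' _ _ H (proj1 Hx)). pose proof (ln_le' x (a n) ltac:(lra) (proj2 Hx)).
  rewrite ln_a in H0, H1. rewrite S_INR in H0. lra. Qed.

Lemma sup_bound n x : (1 <= n)%nat -> a (S n) <= x <= a n ->
  r x <= Rmax (u (S n)) (u (S n) * (INR (S n) / INR n)).
Proof. intros Hn Hx. pose proof (apos (S n)) as Hy. pose proof lnK as HlK.
  assert (HN : 0 < INR n) by (apply lt_0_INR; lia).
  pose proof (ln_bounds n x Hx) as [HL1 HL2].
  assert (Hx0 : 0 < x) by lra.
  set (L := - ln x) in *. set (y := a (S n)) in *. set (H := g y / y).
  assert (Hh : g x / x <= H) by (pose proof (a_le_1 n); apply mono; lra).
  assert (Hr : r x = (g x / x) / L). { unfold r. rewrite eta_pos by auto. unfold L. field.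
    assert (0 < L) by nra. unfold L in *. split; lra. }
  assert (Hu : u (S n) = H / ((INR n + 1) * ln K)).
  { unfold u. fold y. rewrite eta_pos by auto. unfold y. rewrite ln_a. fold y. unfold H. rewrite S_INR. field. nra. }
  assert (Hu2 : u (S n) * (INR (S n) / INR n) = H / (INR n * ln K)).
  { rewrite Hu, S_INR. field. nra. }
  assert (HrH : r x <= H / L).
  { rewrite Hr. unfold Rdiv. apply Rmult_le_compat_r; auto. left; apply Rinv_0_lt_compat; nra. }
  destruct (Rle_dec 0 H).
  - eapply Rle_trans; [|apply Rmax_r]. rewrite Hu2. eapply Rle_trans; [apply HrH|].
    apply div_mono; auto; nra.
  - eapply Rle_trans; [|apply Rmax_l]. rewrite Hu. eapply Rle_trans; [apply HrH|].
    apply div_mono_neg; auto; nra.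
Qed.

Lemma inf_bound n x : (1 <= n)%nat -> a (S n) <= x <= a n ->
  - r x <= Rmax (- u n) (- u n * (INR n / INR (S n))).
Proof. intros Hn Hx. pose proof (apos n) as Hy. pose proof lnK as HlK.
  assert (HN : 0 < INR n) by (apply lt_0_INR; lia).
  pose proof (ln_bounds n x Hx) as [HL1 HL2].
  assert (Hx0 : 0 < x) by (pose proof (apos (S n)); lra).
  set (L := - ln x) in *. set (y := a n) in *. set (H := g y / y).
  assert (Hh : H <= g x / x) by (pose proof (a_le_1 n) as Ha1; fold y in Ha1; apply mono; lra).
  assert (Hr : r x = (g x / x) / L). { unfold r. rewrite eta_pos by auto. unfold L. field.
    assert (0 < L) by nra. unfold L in *. split; lra. }
  assert (Hu : u n = H / (INR n * ln K)).
  { unfold u. fold y. rewrite eta_pos by auto. unfold y. rewrite ln_a. fold y. unfold H. field. nra. }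
  assert (Hu2 : - u n * (INR n / INR (S n)) = - (H / ((INR n + 1) * ln K))).
  { rewrite Hu, S_INR. field. nra. }
  assert (HrH : H / L <= r x).
  { rewrite Hr. unfold Rdiv. apply Rmult_le_compat_r; auto. left; apply Rinv_0_lt_compat; nra. }
  destruct (Rle_dec 0 H).
  - eapply Rle_trans; [|apply Rmax_r]. rewrite Hu2. apply Ropp_le_contravar.
    eapply Rle_trans; [|apply HrH]. apply div_mono; auto; nra.
  - eapply Rle_trans; [|apply Rmax_l]. rewrite Hu. apply Ropp_le_contravar.
    eapply Rle_trans; [|apply HrH]. apply div_mono_neg; auto; nra.
Qed.

Lemma inv_small n eta : (1 <= n)%nat -> 1 < INR n * eta -> / INR n < eta.
Proof. intros Hn H. assert (0 < INR n) by (apply lt_0_INR; lia).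
  apply Rmult_lt_reg_l with (INR n); auto. rewrite Rinv_r by lra. lra. Qed.

Lemma pick eta M : 0 < eta -> exists delta, 0 < delta /\ forall x, 0 < x < delta ->
  exists n, (M <= n)%nat /\ (1 <= n)%nat /\ 1 < INR n * eta /\ a (S n) <= x <= a n.
Proof. intros He. destruct (INR_unbounded (/ eta)) as [N0 HN0].
  set (N := (N0 + M + 1)%nat). exists (a N). split; [apply apos|].
  intros x Hx. destruct (bracket x) as [n Hn]. { pose proof (a_le_1 N). lra. }
  assert (HnN : (N <= n)%nat). { destruct (Nat.le_gt_cases N n); auto.
    pose proof (a_anti (S n) N ltac:(lia)). lra. }
  exists n. split; [lia|]. split; [lia|]. split; auto.
  assert (INR N0 <= INR n) by (apply le_INR; lia).
  assert (/ eta * eta = 1) by (field; lra). nra. Qed.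

Lemma HBsup : forall eta, 0 < eta -> forall M : nat, exists delta, 0 < delta /\
  forall x, 0 < x < delta -> exists m c, (M <= m)%nat /\ Rabs (c - 1) < eta /\
     r x <= Rmax (u m) (u m * c).
Proof. intros eta He M. destruct (pick eta M He) as [d [Hd H]]. exists d. split; auto.
  intros x Hx. destruct (H x Hx) as [n [Hm [H1 [H2 H3]]]].
  exists (S n), (INR (S n) / INR n). split; [lia|]. split; [|apply sup_bound; auto].
  assert (0 < INR n) by (apply lt_0_INR; lia).
  replace (INR (S n) / INR n - 1) with (/ INR n) by (rewrite S_INR; field; lra).
  rewrite Rabs_pos_eq by (left; apply Rinv_0_lt_compat; auto). apply inv_small; auto. Qed.

Lemma HBinf : forall eta, 0 < eta -> forall M : nat, exists delta, 0 < delta /\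
  forall x, 0 < x < delta -> exists m c, (M <= m)%nat /\ Rabs (c - 1) < eta /\
     - r x <= Rmax (- u m) (- u m * c).
Proof. intros eta He M. destruct (pick eta M He) as [d [Hd H]]. exists d. split; auto.
  intros x Hx. destruct (H x Hx) as [n [Hm [H1 [H2 H3]]]].
  exists n, (INR n / INR (S n)). split; [lia|]. split; [|apply inf_bound; auto].
  assert (0 < INR n) by (apply lt_0_INR; lia).
  replace (INR n / INR (S n) - 1) with (- / (INR n + 1)) by (rewrite S_INR; field; lra).
  rewrite Rabs_Ropp, Rabs_pos_eq by (left; apply Rinv_0_lt_compat; lra).
  apply Rlt_trans with (/ INR n). apply Rinv_lt_contravar; nra. apply inv_small; auto. Qed.

Theorem main_app :
  (forall l : Rbar, is_limsup_right0 r l <-> is_limsup_seq u l) /\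
  (forall l : Rbar, is_liminf_right0 r l <-> is_liminf_seq u l).
Proof. split; intros l.
  - apply (abs_limsup r u a apos a0 (fun n => eq_refl) HBsup).
  - rewrite liminf_neg_f, liminf_neg_s.
    apply (abs_limsup (fun x => - r x) (fun n => - u n) a apos a0 (fun n => eq_refl) HBinf).
Qed.
End App.

Theorem mainTheorem9 (g : R -> R) (k : nat) :
  in_G0 g -> (1 < k)%nat ->
  (forall l : Rbar,
     is_limsup_right0 (fun x => g x / eta x) l <->
     is_limsup_seq (fun n => g (/ INR k ^ n) / eta (/ INR k ^ n)) l) /\
  (forall l : Rbar,
     is_liminf_right0 (fun x => g x / eta x) l <->
     is_liminf_seq (fun n => g (/ INR k ^ n) / eta (/ INR k ^ n)) l).
Proof. intros Hg Hk. exact (main_app g k Hg Hk). Qed.
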